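(* Let $k\ge 1$ be an integer, $\Delta\ge 0$, and let $w_1\ge w_2\ge\cdots\ge w_N\ge 0$ be reals (with the convention $w_j:=0$ for $j>N$). Suppose that $w_1+w_{k+1}<\tfrac79$, $w_{2k+1}\le\Delta$, and $\sum_{j=1}^N w_j>k\left(\tfrac79+\Delta\right)$. Then the values $w_j$ with $j>3k$ can be divided fractionally among $k$ bundles so that, for every $r\in\{1,\dots,k\}$, bundle $r$ consists of $w_r,w_{k+r},w_{2k+r}$ plus its share of the tail and has total value greater than $\tfrac79+\Delta$. Formally, there exist reals $x_{r,j}\ge 0$ ($1\le r\le k$, $3k<j\le N$) with $\sum_{r=1}^k x_{r,j}=w_j$ for all $j>3k$ and $$w_r+w_{k+r}+w_{2k+r}+\sum_{j>3k}x_{r,j}>\tfrac79+\Delta\quad\text{for all } r\in\{1,\dots,k\}.$$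
   Context: In the paper, the $w_j$ are agent $i$'s values (normalized so that her target is 1) of the items of the witness allocation in round $k$, $\Delta$ is the largest value among witness items worth less than $2/9$ (at most $2k$ items are worth at least $2/9$, which gives $w_{2k+1}\le\Delta$), and the sum hypothesis is the ''Water-Level Condition'' that every one of the $k$ witness bundles is worth more than $\tfrac79+\Delta$. Items of small value (''water'') are treated as fractionally divisible. *)

(* Defs.v *)
From mathcomp Require Import all_boot all_order all_algebra.
Set Implicit Arguments. Unset Strict Implicit. Unset Printing Implicit Defensive.
Import Order.TTheory GRing.Theory Num.Theory.
Local Open Scope ring_scope.

(* Values w_1,...,w_N given by w : nat -> R (indices 1..N);
   wext N w j is w_j with the convention w_j := 0 for j > N (and for j = 0). *)
Definition wext (R : realFieldType) (N : nat) (w : nat -> R) (j : nat) : R :=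
  if (1 <= j <= N)%N then w j else 0.

(* Main.v *)
Require Import Defs.
From mathcomp Require Import all_boot all_order all_algebra.
From mathcomp Require Import zify ring lra.
Import Order.TTheory GRing.Theory Num.Theory.
Local Open Scope ring_scope.

Section H.
Variables (R : realFieldType) (N : nat) (w : nat -> R).
Hypothesis mono : forall j : nat, (1 <= j)%N -> (j < N)%N -> w j.+1 <= w j.
Hypothesis nn : forall j : nat, (1 <= j <= N)%N -> 0 <= w j.

Lemma mono_in i j : (1 <= i)%N -> (i <= j)%N -> (j <= N)%N -> w j <= w i.
Proof.
move=> h1; elim: j => [|j IH] hij hjN; first lia.
case: (ltngtP i j.+1) => h; first last.
- by rewrite h.
- lia.
apply: le_trans (IH _ _); [apply: mono|..]; lia.
Qed.

Lemma wext_mono i j : (1 <= i)%N -> (i <= j)%N -> wext N w j <= wext N w i.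
Proof.
move=> h1 hij; rewrite /wext.
case: ifP => hj; case: ifP => hi.
- apply: mono_in; lia.
- exfalso; lia.
- by apply: nn.
- by [].
Qed.

Lemma wext_ge0 j : 0 <= wext N w j.
Proof. by rewrite /wext; case: ifP => // h; apply: nn. Qed.

Lemma split_sum n : \sum_(1 <= j < N.+1) w j =
  \sum_(1 <= j < n.+1) wext N w j + \sum_(n.+1 <= j < N.+1) w j.
Proof.
elim: n => [|n IH]; first by rewrite [X in _ = X + _]big_geq // add0r.
rewrite IH [X in _ = X + _]big_nat_recr //= -addrA; congr (_ + _).
case: (ltnP n.+1 N.+1) => h.
  rewrite big_ltn // /wext.
  have -> : (1 <= n.+1 <= N)%N by lia.
  by [].
rewrite !big_geq //; last lia.
rewrite /wext; have -> : (1 <= n.+1 <= N)%N = false by lia.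
by rewrite addr0.
Qed.
End H.

Lemma sum3 (R : realFieldType) (f : nat -> R) k :
  \sum_(1 <= j < (3 * k).+1) f j =
  \sum_(1 <= r < k.+1) (f r + f (k + r)%N + f (2 * k + r)%N).
Proof.
rewrite (big_cat_nat _ (n := k.+1)) //=; last lia.
rewrite (big_cat_nat _ (m := k.+1) (n := (2 * k).+1)) //=; try lia.
rewrite !big_split /= -!addrA; congr (_ + _); congr (_ + _).
  have := big_addn (idx:=0) (op:=+%R) 1 (2 * k).+1 k xpredT f.
  rewrite add1n => ->; have -> : ((2 * k).+1 - k = k.+1)%N by lia.
  by apply: eq_bigr => i _; rewrite addnC.
have := big_addn (idx:=0) (op:=+%R) 1 (3 * k).+1 (2*k) xpredT f.
rewrite add1n => ->; have -> : ((3 * k).+1 - 2 * k = k.+1)%N by lia.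
by apply: eq_bigr => i _; rewrite addnC.
Qed.

Theorem lemma5p5 (R : realFieldType) (k N : nat) (Delta : R) (w : nat -> R) :
  (1 <= k)%N -> 0 <= Delta ->
  (forall j : nat, (1 <= j)%N -> (j < N)%N -> w j.+1 <= w j) ->
  (forall j : nat, (1 <= j <= N)%N -> 0 <= w j) ->
  wext N w 1 + wext N w k.+1 < 7 / 9 ->
  wext N w (2 * k).+1 <= Delta ->
  \sum_(1 <= j < N.+1) w j > k%:R * (7 / 9 + Delta) ->
  exists x : nat -> nat -> R,
    (forall (r : nat) (j : nat), (1 <= r <= k)%N -> (3 * k < j <= N)%N -> 0 <= x r j) /\
    (forall j : nat, (3 * k < j <= N)%N -> \sum_(1 <= r < k.+1) x r j = w j) /\
    (forall r : nat, (1 <= r <= k)%N ->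
       wext N w r + wext N w (k + r) + wext N w (2 * k + r)
         + \sum_((3 * k).+1 <= j < N.+1) x r j > 7 / 9 + Delta).
Proof.
move=> hk hD mono nn h1 h2 hS.
set c := 7 / 9 + Delta.
set a := fun r => wext N w r + wext N w (k + r) + wext N w (2 * k + r).
have ha : forall r, (1 <= r <= k)%N -> a r < c.
  move=> r hr; rewrite /a /c.
  have e1 := @wext_mono R N w mono nn 1 r isT ltac:(lia).
  have e2 := @wext_mono R N w mono nn k.+1 (k + r)%N isT ltac:(lia).
  have e3 := @wext_mono R N w mono nn (2 * k).+1 (2 * k + r)%N isT ltac:(lia).
  lra.
set D := \sum_(1 <= r < k.+1) (c - a r).
set T := \sum_((3 * k).+1 <= j < N.+1) w j.
have hDT : D < T.
  have := @split_sum R N w (3 * k); rewrite sum3 -/T => e.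
  rewrite /D sumrB sumr_const_nat subn1 /=.
  have ec : c *+ k = k%:R * c by rewrite mulr_natl.
  move: hS; rewrite e -/c ec => hS.
  have -> : \sum_(1 <= r < k.+1) a r =
     \sum_(1 <= r < k.+1) (wext N w r + wext N w (k + r)%N + wext N w (2 * k + r)%N) by [].
  lra.
have hD0 : 0 < D.
  rewrite /D big_ltn; last lia.
  have : 0 <= \sum_(2 <= r < k.+1) (c - a r).
    rewrite big_nat_cond; apply: sumr_ge0 => i /andP[hi _].
    have := ha i ltac:(lia); lra.
  have := ha 1%N ltac:(lia); lra.
exists (fun r j => w j * ((c - a r) / D)).
split; [|split].
- move=> r j hr hj; apply: mulr_ge0; first by apply: nn; lia.
  apply: divr_ge0; last lra. have := ha r hr; lra.
- move=> j hj; rewrite -mulr_sumr -mulr_suml -/D divff ?mulr1 //.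
  by apply/eqP => e; rewrite e in hD0; rewrite ltxx in hD0.
- move=> r hr; rewrite -/(a r) -mulr_suml -/T.
  have har := ha r hr.
  have : c - a r < T * ((c - a r) / D).
    rewrite mulrA ltr_pdivlMr //; nra.
  lra.
Qed.
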